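(* There are absolute constants $B_0$ and $M$ such that the following holds. Let $k,k'$ be integers with $1\le k\le k'\le k+10$, and let $u_1=e^{ikx}e^{-k^2t}$, $u_2=e^{ik'y}e^{-(k')^2t}$, both solutions of $\dot u=\Delta u$. There exist a $C^2$ complex function $u$ and a continuous vector field $B$ with values in $\mathbb{C}^2$, $|B|\le B_0$, on $\mathbb{T}^2\times[0,\frac7{2k}]$, such that $\dot u=\Delta u+B\cdot\nabla u$ there, and: for $t\in[0,\frac1{2k}]$, $u=u_1$ and $B=0$; for $t\in[\frac3k,\frac7{2k}]$, $u=u_2$ and $B=0$; and for $t\in[0,\frac7{2k}]$, $u=f(t)e^{ikx}+g(t)e^{ik'y}$ with $f,g\in C^2$ satisfying, for $0\le\alpha\le2$, $|f^{(\alpha)}(t)|\le Mk^{2\alpha}e^{-k^2t}$ and $|g^{(\alpha)}(t)|\le M(k')^{2\alpha}e^{-(k')^2t}$.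
   Context: $\mathbb{T}^2=(\mathbb{R}/2\pi\mathbb{Z})^2$ with coordinates $(x,y)$; $t$ the third coordinate; $\dot u=\partial_tu$; $\Delta$ and $\nabla$ are in the spatial variables $(x,y)$, and $B\cdot\nabla u=B_1\partial_xu+B_2\partial_yu$. *)

(* Defs.v *)
From Stdlib Require Import Reals.
From Coquelicot Require Import Coquelicot.
Open Scope R_scope.

Definition cexpi (theta : R) : C := (cos theta, sin theta).

(* derivative (within the set D, i.e. one-sided at endpoints of an interval)
   of a complex-valued function of one real variable *)
Definition has_deriv_within (D : R -> Prop) (f : R -> C) (s : R) (l : C) : Prop :=
  filterlim (fun h : R => Cdiv (Cminus (f (s + h)) (f s)) (RtoC h))
    (within (fun h => h <> 0 /\ D (s + h)) (locally 0)) (locally l).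

Definition cont_within1 (D : R -> Prop) (f : R -> C) (s : R) : Prop :=
  filterlim f (within D (locally s)) (locally (f s)).

Definition C2_on (D : R -> Prop) (f f1 f2 : R -> C) : Prop :=
  forall s, D s ->
    has_deriv_within D f s (f1 s) /\ has_deriv_within D f1 s (f2 s) /\
    cont_within1 D f s /\ cont_within1 D f1 s /\ cont_within1 D f2 s.

(* functions on T^2 x (time set), written u x y t, 2pi-periodic in x and y *)
Definition periodic2 {V : Type} (u : R -> R -> R -> V) : Prop :=
  forall x y t, u (x + 2 * PI) y t = u x y t /\ u x (y + 2 * PI) t = u x y t.

Inductive dir := DX | DY | DT.

(* du is the partial derivative of u in direction d on R^2 x S
   (the time derivative is taken within S, i.e. one-sided at the boundary) *)
Definition is_partial (S : R -> Prop) (d : dir) (u du : R -> R -> R -> C) : Prop :=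
  forall x y t, S t ->
    match d with
    | DX => has_deriv_within (fun _ => True) (fun s => u s y t) x (du x y t)
    | DY => has_deriv_within (fun _ => True) (fun s => u x s t) y (du x y t)
    | DT => has_deriv_within S (fun s => u x y s) t (du x y t)
    end.

Definition cont_on_slab {V : UniformSpace} (S : R -> Prop) (F : R -> R -> R -> V) : Prop :=
  forall x y t, S t ->
    filterlim (fun p : R * R * R => F (fst (fst p)) (snd (fst p)) (snd p))
      (within (fun p : R * R * R => S (snd p)) (locally (x, y, t)))
      (locally (F x y t)).

(* u is C^2 on R^2 x S: D1 d are its first partials, D2 d e = partial_e (partial_d u),
   and u and all these partials are jointly continuous on R^2 x S *)
Definition C2_slab (S : R -> Prop) (u : R -> R -> R -> C)
    (D1 : dir -> R -> R -> R -> C) (D2 : dir -> dir -> R -> R -> R -> C) : Prop :=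
  cont_on_slab S u /\
  (forall d, is_partial S d u (D1 d) /\ cont_on_slab S (D1 d)) /\
  (forall d e, is_partial S e (D1 d) (D2 d e) /\ cont_on_slab S (D2 d e)).

Definition C2norm (b : C * C) : R := sqrt (Cmod (fst b) ^ 2 + Cmod (snd b) ^ 2).

(* Main.v *)
Require Import Defs.
From Stdlib Require Import Reals Lra.
From Coquelicot Require Import Coquelicot.
Open Scope R_scope.
Lemma dR_plus (f g : R -> R) (x a b : R) : is_derive f x a -> is_derive g x b ->
  is_derive (fun s => f s + g s) x (a + b).
Proof. intros; now apply (is_derive_plus f g). Qed.
Lemma dR_minus (f g : R -> R) (x a b : R) : is_derive f x a -> is_derive g x b ->
  is_derive (fun s => f s - g s) x (a - b).
Proof. intros; now apply (is_derive_minus f g). Qed.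
Lemma dR_mult (f g : R -> R) (x a b : R) : is_derive f x a -> is_derive g x b ->
  is_derive (fun s => f s * g s) x (a * g x + f x * b).
Proof. intros; apply (is_derive_mult f g); auto. intros; apply Rmult_comm. Qed.
Lemma dR_const (c x : R) : is_derive (fun _ => c) x 0.
Proof. apply (is_derive_const c). Qed.
Lemma dR_comp (f g : R -> R) (x a b : R) : is_derive f (g x) a -> is_derive g x b ->
  is_derive (fun s => f (g s)) x (b * a).
Proof. intros; now apply (is_derive_comp f g). Qed.
Lemma dR_ext (f g : R -> R) (x a b : R) : (forall s, f s = g s) -> a = b -> is_derive f x a -> is_derive g x b.
Proof. intros H1 H2 H3; subst; now apply (is_derive_ext f g). Qed.

Lemma cR_plus {U : UniformSpace} (f g : U -> R) x : continuous f x -> continuous g x ->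
  continuous (fun s => f s + g s) x.
Proof. intros; now apply (continuous_plus f g). Qed.
Lemma cR_minus {U : UniformSpace} (f g : U -> R) x : continuous f x -> continuous g x ->
  continuous (fun s => f s - g s) x.
Proof. intros; now apply (continuous_minus f g). Qed.
Lemma cR_mult {U : UniformSpace} (f g : U -> R) x : continuous f x -> continuous g x ->
  continuous (fun s => f s * g s) x.
Proof. intros; now apply (continuous_mult f g). Qed.
Lemma cR_comp {U : UniformSpace} (g : R -> R) (f : U -> R) x :
  (forall r, continuous g r) -> continuous f x -> continuous (fun s => g (f s)) x.
Proof. intros; apply (continuous_comp f g); auto. Qed.
Lemma cR_cos r : continuous cos r.
Proof. apply (continuous_cos_comp (fun x => x)); apply continuous_id. Qed.
Lemma cR_sin r : continuous sin r.
Proof. apply (continuous_sin_comp (fun x => x)); apply continuous_id. Qed.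
Lemma cR_exp r : continuous exp r.
Proof. apply (continuous_exp_comp (fun x => x)); apply continuous_id. Qed.
Lemma cR_of_der (f f' : R -> R) : (forall x, is_derive f x (f' x)) -> forall x, continuous f x.
Proof. intros H x; apply (ex_derive_continuous (V := R_NormedModule)); exists (f' x); auto. Qed.

Lemma cont_pair {U V W : UniformSpace} (f : U -> V * W) p :
  continuous (fun z => fst (f z)) p -> continuous (fun z => snd (f z)) p -> continuous f p.
Proof.
  intros H1 H2. apply filterlim_locally. intros eps.
  apply filterlim_locally with (eps := eps) in H1.
  apply filterlim_locally with (eps := eps) in H2.
  generalize (filter_and _ _ H1 H2). apply filter_imp. intros z [A B]. split; assumption.
Qed.

Lemma cont_within {U V : UniformSpace} (f : U -> V) (D : U -> Prop) x :
  continuous f x -> filterlim f (within D (locally x)) (locally (f x)).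
Proof.
  intros H P HP. specialize (H P HP). unfold filtermap, within in *.
  revert H. apply filter_imp. auto.
Qed.

Lemma Cdiv_R (z : C) h : h <> 0 -> Cdiv z (RtoC h) = (fst z / h, snd z / h).
Proof. intros. destruct z. unfold Cdiv, Cinv, Cmult, RtoC; simpl. f_equal; field; auto. Qed.

Lemma hdw_of D (h : R -> C) s a b :
  is_derive (fun r => fst (h r)) s a -> is_derive (fun r => snd (h r)) s b ->
  has_deriv_within D h s (a, b).
Proof.
  intros H1 H2. apply is_derive_Reals in H1. apply is_derive_Reals in H2.
  unfold has_deriv_within. apply filterlim_locally. intros eps.
  destruct (H1 eps (cond_pos eps)) as [d1 Hd1].
  destruct (H2 eps (cond_pos eps)) as [d2 Hd2].
  unfold within. assert (Hd : 0 < Rmin d1 d2) by (apply Rmin_pos; apply cond_pos).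
  exists (mkposreal _ Hd). intros y Hy [Hy0 _].
  change (Rabs (y - 0) < Rmin d1 d2) in Hy. rewrite Rminus_0_r in Hy.
  rewrite Cdiv_R by auto. split; simpl.
  - change (Rabs ((fst (h (s + y)) - fst (h s)) / y - a) < eps).
    apply Hd1; auto. apply Rlt_le_trans with (1 := Hy), Rmin_l.
  - change (Rabs ((snd (h (s + y)) - snd (h s)) / y - b) < eps).
    apply Hd2; auto. apply Rlt_le_trans with (1 := Hy), Rmin_r.
Qed.

Lemma cw1_of D (h : R -> C) s :
  continuous (fun r => fst (h r)) s -> continuous (fun r => snd (h r)) s -> cont_within1 D h s.
Proof. intros. unfold cont_within1. apply cont_within. apply cont_pair; auto. Qed.

Lemma cos_fst3 (c : R) p : continuous (fun q : R*R*R => cos (c * fst (fst q))) p.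
Proof.
  apply cR_comp. apply cR_cos. apply cR_mult. apply continuous_const.
  destruct p as [[x y] t].
  apply (continuous_comp fst fst). apply continuous_fst. apply continuous_fst.
Qed.
Definition glue (a : R) (f1 f2 : R -> R) (x : R) : R :=
  if Rle_dec x a then f1 x else f2 x.

Lemma glue_derive (a : R) (f1 f2 d1 d2 : R -> R) :
  (forall x : R, is_derive f1 x (d1 x)) -> (forall x : R, is_derive f2 x (d2 x)) ->
  f1 a = f2 a -> d1 a = d2 a -> forall x : R, is_derive (glue a f1 f2) x (glue a d1 d2 x).
Proof.
  intros H1 H2 E0 E1 x.
  destruct (Rtotal_order x a) as [Hx|[Hx|Hx]].
  - unfold glue at 2. destruct (Rle_dec x a); [|lra].
    apply (is_derive_ext_loc f1); auto.
    assert (Hd : 0 < a - x) by lra. exists (mkposreal _ Hd). intros y Hy.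
    change (Rabs (y - x) < a - x) in Hy. unfold glue. destruct (Rle_dec y a); auto.
    apply Rabs_def2 in Hy. lra.
  - subst x. unfold glue at 2. destruct (Rle_dec a a); [|lra].
    apply is_derive_Reals. intros eps Heps.
    specialize (H1 a). specialize (H2 a).
    apply is_derive_Reals in H1. apply is_derive_Reals in H2.
    destruct (H1 eps Heps) as [e1 He1]. destruct (H2 eps Heps) as [e2 He2].
    assert (Hd : 0 < Rmin e1 e2) by (apply Rmin_pos; apply cond_pos).
    exists (mkposreal _ Hd). intros h Hh Hlt. simpl in Hlt.
    unfold glue. destruct (Rle_dec a a); [|lra].
    destruct (Rle_dec (a + h) a).
    + apply He1; auto. apply Rlt_le_trans with (1 := Hlt), Rmin_l.
    + rewrite E0, E1. apply He2; auto. apply Rlt_le_trans with (1 := Hlt), Rmin_r.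
  - unfold glue at 2. destruct (Rle_dec x a); [lra|].
    apply (is_derive_ext_loc f2); auto.
    assert (Hd : 0 < x - a) by lra. exists (mkposreal _ Hd). intros y Hy.
    change (Rabs (y - x) < x - a) in Hy. unfold glue. destruct (Rle_dec y a); auto.
    apply Rabs_def2 in Hy. lra.
Qed.

(* degree 7 smoothstep *)
Definition q0 (x : R) := 35 * x^4 - 84 * x^5 + 70 * x^6 - 20 * x^7.
Definition q1 (x : R) := 140 * x^3 - 420 * x^4 + 420 * x^5 - 140 * x^6.
Definition q2 (x : R) := 420 * x^2 - 1680 * x^3 + 2100 * x^4 - 840 * x^5.
Definition q3 (x : R) := 840 * x - 5040 * x^2 + 8400 * x^3 - 4200 * x^4.

Lemma q_d0 (x : R) : is_derive q0 x (q1 x).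
Proof. unfold q0, q1. auto_derive; [exact I | ring]. Qed.
Lemma q_d1 (x : R) : is_derive q1 x (q2 x).
Proof. unfold q1, q2. auto_derive; [exact I | ring]. Qed.
Lemma q_d2 (x : R) : is_derive q2 x (q3 x).
Proof. unfold q2, q3. auto_derive; [exact I | ring]. Qed.

Definition P0 := glue 0 (fun _ => 0) (glue 1 q0 (fun _ => 1)).
Definition P1 := glue 0 (fun _ => 0) (glue 1 q1 (fun _ => 0)).
Definition P2 := glue 0 (fun _ => 0) (glue 1 q2 (fun _ => 0)).
Definition P3 := glue 0 (fun _ => 0) (glue 1 q3 (fun _ => 0)).

Lemma glue_le a f1 f2 x : x <= a -> glue a f1 f2 x = f1 x.
Proof. unfold glue; destruct (Rle_dec x a); auto; lra. Qed.
Lemma glue_gt a f1 f2 x : a < x -> glue a f1 f2 x = f2 x.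
Proof. unfold glue; destruct (Rle_dec x a); auto; lra. Qed.

Ltac gd := apply glue_derive; [ intros; apply dR_const | | | ].

Lemma P_d0 (x : R) : is_derive P0 x (P1 x).
Proof.
  unfold P0, P1. apply glue_derive.
  - intros; apply dR_const.
  - apply glue_derive; [apply q_d0 | intros; apply dR_const | unfold q0; ring | unfold q1; ring].
  - rewrite glue_le by lra. unfold q0; ring.
  - rewrite glue_le by lra. unfold q1; ring.
Qed.
Lemma P_d1 (x : R) : is_derive P1 x (P2 x).
Proof.
  unfold P1, P2. apply glue_derive.
  - intros; apply dR_const.
  - apply glue_derive; [apply q_d1 | intros; apply dR_const | unfold q1; ring | unfold q2; ring].
  - rewrite glue_le by lra. unfold q1; ring.
  - rewrite glue_le by lra. unfold q2; ring.
Qed.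
Lemma P_d2 (x : R) : is_derive P2 x (P3 x).
Proof.
  unfold P2, P3. apply glue_derive.
  - intros; apply dR_const.
  - apply glue_derive; [apply q_d2 | intros; apply dR_const | unfold q2; ring | unfold q3; ring].
  - rewrite glue_le by lra. unfold q2; ring.
  - rewrite glue_le by lra. unfold q3; ring.
Qed.

Lemma P0_le0 x : x <= 0 -> P0 x = 0.
Proof. intros; unfold P0; rewrite glue_le; auto. Qed.
Lemma P1_le0 x : x <= 0 -> P1 x = 0.
Proof. intros; unfold P1; rewrite glue_le; auto. Qed.
Lemma P0_ge1 x : 1 <= x -> P0 x = 1.
Proof. intros. unfold P0. rewrite glue_gt by lra. destruct (Req_dec x 1).
  subst; rewrite glue_le by lra; unfold q0; ring. rewrite glue_gt by lra; auto. Qed.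
Lemma P1_ge1 x : 1 <= x -> P1 x = 0.
Proof. intros. unfold P1. rewrite glue_gt by lra. destruct (Req_dec x 1).
  subst; rewrite glue_le by lra; unfold q1; ring. rewrite glue_gt by lra; auto. Qed.

Lemma P_bounds x : Rabs (P0 x) <= 209 /\ Rabs (P1 x) <= 140 * 8 /\ Rabs (P2 x) <= 5040.
Proof.
  destruct (Rle_dec x 0).
  { unfold P0, P1, P2; rewrite !glue_le by auto. rewrite Rabs_R0; lra. }
  destruct (Rle_dec x 1).
  { unfold P0, P1, P2; rewrite !(glue_gt 0) by lra; rewrite !(glue_le 1) by lra.
    assert (H0 : 0 <= x) by lra.
    assert (A2 : 0 <= x^2 <= 1) by (split; [apply pow_le; lra | rewrite <- (pow1 2); apply pow_incr; lra]).
    assert (A3 : 0 <= x^3 <= 1) by (split; [apply pow_le; lra | rewrite <- (pow1 3); apply pow_incr; lra]).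
    assert (A4 : 0 <= x^4 <= 1) by (split; [apply pow_le; lra | rewrite <- (pow1 4); apply pow_incr; lra]).
    assert (A5 : 0 <= x^5 <= 1) by (split; [apply pow_le; lra | rewrite <- (pow1 5); apply pow_incr; lra]).
    assert (A6 : 0 <= x^6 <= 1) by (split; [apply pow_le; lra | rewrite <- (pow1 6); apply pow_incr; lra]).
    assert (A7 : 0 <= x^7 <= 1) by (split; [apply pow_le; lra | rewrite <- (pow1 7); apply pow_incr; lra]).
    unfold q0, q1, q2; repeat split; apply Rabs_le; split; lra. }
  unfold P0, P1, P2; rewrite !(glue_gt 0), !(glue_gt 1) by lra. rewrite Rabs_R1, Rabs_R0. lra.
Qed.

Definition W (k k' : R) (a : R -> R) (za : C) (b : R -> R) (zb : C) : R -> R -> R -> C :=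
  fun x y t => (RtoC (a t) * (za * cexpi (k * x)) + RtoC (b t) * (zb * cexpi (k' * y)))%C.

Lemma W_fst k k' a za b zb x y t : fst (W k k' a za b zb x y t) =
  a t * (fst za * cos (k*x) - snd za * sin (k*x)) + b t * (fst zb * cos (k'*y) - snd zb * sin (k'*y)).
Proof. unfold W, cexpi, RtoC; destruct za, zb; simpl; ring. Qed.
Lemma W_snd k k' a za b zb x y t : snd (W k k' a za b zb x y t) =
  a t * (fst za * sin (k*x) + snd za * cos (k*x)) + b t * (fst zb * sin (k'*y) + snd zb * cos (k'*y)).
Proof. unfold W, cexpi, RtoC; destruct za, zb; simpl; ring. Qed.

Lemma W_partial_X (S : R -> Prop) k k' a za b zb :
  is_partial S DX (W k k' a za b zb) (W k k' a (za * (0, k))%C b (RtoC 0)).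
Proof.
  intros x y t _. simpl.
  rewrite (surjective_pairing (W k k' a (za * (0, k))%C b (RtoC 0) x y t)).
  apply hdw_of.
  - eapply dR_ext. intros s. symmetry. apply W_fst. rewrite W_fst. reflexivity.
    destruct za. auto_derive. exact I. simpl. ring.
  - eapply dR_ext. intros s. symmetry. apply W_snd. rewrite W_snd. reflexivity.
    destruct za. auto_derive. exact I. simpl. ring.
Qed.

Lemma W_partial_Y (S : R -> Prop) k k' a za b zb :
  is_partial S DY (W k k' a za b zb) (W k k' a (RtoC 0) b (zb * (0, k'))%C).
Proof.
  intros x y t _. simpl.
  rewrite (surjective_pairing (W k k' a (RtoC 0) b (zb * (0, k'))%C x y t)).
  apply hdw_of.
  - eapply dR_ext. intros s. symmetry. apply W_fst. rewrite W_fst. reflexivity.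
    destruct zb. auto_derive. exact I. simpl. ring.
  - eapply dR_ext. intros s. symmetry. apply W_snd. rewrite W_snd. reflexivity.
    destruct zb. auto_derive. exact I. simpl. ring.
Qed.

Lemma dR_mulc (f : R -> R) (x l c : R) : is_derive f x l -> is_derive (fun s => f s * c) x (l * c).
Proof.
  intros H. apply (dR_ext (fun s => c * f s) _ x (c * l)). intros; ring. ring.
  apply (is_derive_scal f x c l H).
Qed.

Lemma W_partial_T (S : R -> Prop) (k k' : R) (a a' : R -> R) (za : C) (b b' : R -> R) (zb : C) :
  (forall t : R, is_derive a t (a' t)) -> (forall t : R, is_derive b t (b' t)) ->
  is_partial S DT (W k k' a za b zb) (W k k' a' za b' zb).
Proof.
  intros Ha Hb x y t _. simpl.
  rewrite (surjective_pairing (W k k' a' za b' zb x y t)).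
  apply hdw_of.
  - set (K1 := fst za * cos (k*x) - snd za * sin (k*x)).
    set (K2 := fst zb * cos (k'*y) - snd zb * sin (k'*y)).
    apply (dR_ext (fun s => a s * K1 + b s * K2) _ t (a' t * K1 + b' t * K2)).
    intros s; rewrite W_fst; reflexivity. rewrite W_fst; reflexivity.
    apply dR_plus; apply dR_mulc; auto.
  - set (K1 := fst za * sin (k*x) + snd za * cos (k*x)).
    set (K2 := fst zb * sin (k'*y) + snd zb * cos (k'*y)).
    apply (dR_ext (fun s => a s * K1 + b s * K2) _ t (a' t * K1 + b' t * K2)).
    intros s; rewrite W_snd; reflexivity. rewrite W_snd; reflexivity.
    apply dR_plus; apply dR_mulc; auto.
Qed.

Lemma c3_x (p : R*R*R) : continuous (fun q : R*R*R => fst (fst q)) p.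
Proof. destruct p as [[x y] t]. apply (continuous_comp fst fst). apply continuous_fst. apply continuous_fst. Qed.
Lemma c3_y (p : R*R*R) : continuous (fun q : R*R*R => snd (fst q)) p.
Proof. destruct p as [[x y] t]. apply (continuous_comp fst snd). apply continuous_fst. apply continuous_snd. Qed.
Lemma c3_t (p : R*R*R) : continuous (fun q : R*R*R => snd q) p.
Proof. destruct p as [[x y] t]. apply continuous_snd. Qed.

Lemma c3_trig (c : R) (za : C) (f : R*R*R -> R) p : continuous f p ->
  continuous (fun q => fst za * cos (c * f q) - snd za * sin (c * f q)) p /\
  continuous (fun q => fst za * sin (c * f q) + snd za * cos (c * f q)) p.
Proof.
  intros Hf. assert (H : continuous (fun q => c * f q) p) by (apply cR_mult; auto; apply continuous_const).
  split; [apply cR_minus | apply cR_plus]; apply cR_mult; try apply continuous_const;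
   apply cR_comp; auto using cR_cos, cR_sin.
Qed.

Lemma W_cont (S : R -> Prop) k k' a za b zb :
  (forall t, continuous a t) -> (forall t, continuous b t) ->
  cont_on_slab S (W k k' a za b zb).
Proof.
  intros Ha Hb x y t _. unfold cont_on_slab.
  apply (cont_within (fun p : R*R*R => W k k' a za b zb (fst (fst p)) (snd (fst p)) (snd p))).
  assert (HA : continuous (fun q : R*R*R => a (snd q)) (x,y,t)) by (apply cR_comp; auto; apply c3_t).
  assert (HB : continuous (fun q : R*R*R => b (snd q)) (x,y,t)) by (apply cR_comp; auto; apply c3_t).
  destruct (c3_trig k za _ (x,y,t) (c3_x (x,y,t))) as [T1 T2].
  destruct (c3_trig k' zb _ (x,y,t) (c3_y (x,y,t))) as [T3 T4].
  apply cont_pair.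
  - eapply continuous_ext. intros q. symmetry. apply W_fst.
    apply cR_plus; apply cR_mult; auto.
  - eapply continuous_ext. intros q. symmetry. apply W_snd.
    apply cR_plus; apply cR_mult; auto.
Qed.

Definition phi (k t : R) := 1 - P0 (k * t - 2).
Definition phi1 (k t : R) := - (k * P1 (k * t - 2)).
Definition phi2 (k t : R) := - (k ^ 2 * P2 (k * t - 2)).
Definition phi3 (k t : R) := - (k ^ 3 * P3 (k * t - 2)).
Definition psi (k t : R) := P0 (2 * k * t - 1).
Definition psi1 (k t : R) := 2 * k * P1 (2 * k * t - 1).
Definition psi2 (k t : R) := 4 * k ^ 2 * P2 (2 * k * t - 1).
Definition psi3 (k t : R) := 8 * k ^ 3 * P3 (2 * k * t - 1).

Lemma lin_d (c d x : R) : is_derive (fun s => c * s - d) x c.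
Proof. apply is_derive_Reals. apply is_derive_Reals. auto_derive; [exact I | simpl; ring]. Qed.

Lemma Pc_d (F F' : R -> R) (c d t : R) : (forall x : R, is_derive F x (F' x)) ->
  is_derive (fun s => F (c * s - d)) t (c * F' (c * t - d)).
Proof. intros H. apply (dR_comp F (fun s => c * s - d)); auto. apply lin_d. Qed.

Lemma phi_d0 k t : is_derive (phi k) t (phi1 k t).
Proof.
  apply (dR_ext (fun s => 1 - P0 (k * s - 2)) (phi k) t (0 - k * P1 (k * t - 2))).
  - intros; reflexivity.
  - unfold phi1; ring.
  - apply dR_minus; [apply dR_const | apply (Pc_d P0 P1); apply P_d0].
Qed.

Lemma dR_scal (f : R -> R) (a x l : R) : is_derive f x l -> is_derive (fun s => a * f s) x (a * l).
Proof. intros H. apply (is_derive_scal f x a l H). Qed.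

Lemma aPc_d (F F' : R -> R) (a c d t : R) : (forall x : R, is_derive F x (F' x)) ->
  is_derive (fun s => a * F (c * s - d)) t (a * (c * F' (c * t - d))).
Proof. intros H. apply dR_scal. apply Pc_d; auto. Qed.

Lemma phi_d1 k t : is_derive (phi1 k) t (phi2 k t).
Proof.
  apply (dR_ext (fun s => (-k) * P1 (k * s - 2)) (phi1 k) t ((-k) * (k * P2 (k * t - 2)))).
  - intros; unfold phi1; ring.
  - unfold phi2; ring.
  - apply aPc_d. apply P_d1.
Qed.
Lemma phi_d2 k t : is_derive (phi2 k) t (phi3 k t).
Proof.
  apply (dR_ext (fun s => (-k^2) * P2 (k * s - 2)) (phi2 k) t ((-k^2) * (k * P3 (k * t - 2)))).
  - intros; unfold phi2; ring.
  - unfold phi3; ring.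
  - apply aPc_d. apply P_d2.
Qed.
Lemma psi_d0 k t : is_derive (psi k) t (psi1 k t).
Proof.
  apply (dR_ext (fun s => 1 * P0 (2 * k * s - 1)) (psi k) t (1 * (2 * k * P1 (2 * k * t - 1)))).
  - intros; unfold psi; ring.
  - unfold psi1; ring.
  - apply aPc_d. apply P_d0.
Qed.
Lemma psi_d1 k t : is_derive (psi1 k) t (psi2 k t).
Proof.
  apply (dR_ext (fun s => (2 * k) * P1 (2 * k * s - 1)) (psi1 k) t ((2 * k) * (2 * k * P2 (2 * k * t - 1)))).
  - intros; unfold psi1; ring.
  - unfold psi2; ring.
  - apply aPc_d. apply P_d1.
Qed.
Lemma psi_d2 k t : is_derive (psi2 k) t (psi3 k t).
Proof.
  apply (dR_ext (fun s => (4 * k ^ 2) * P2 (2 * k * s - 1)) (psi2 k) t ((4 * k ^ 2) * (2 * k * P3 (2 * k * t - 1)))).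
  - intros; unfold psi2; ring.
  - unfold psi3; ring.
  - apply aPc_d. apply P_d2.
Qed.

Lemma expd (k x : R) : is_derive (fun s => exp (- k ^ 2 * s)) x (- k ^ 2 * exp (- k ^ 2 * x)).
Proof. apply is_derive_Reals. apply is_derive_Reals. auto_derive; [exact I | simpl; ring]. Qed.

Lemma pe_d (h h' : R -> R) (k t : R) : (forall x : R, is_derive h x (h' x)) ->
  is_derive (fun s => h s * exp (- k ^ 2 * s)) t ((h' t - k ^ 2 * h t) * exp (- k ^ 2 * t)).
Proof.
  intros H.
  apply (dR_ext (fun s => h s * exp (- k ^ 2 * s)) _ t
     (h' t * exp (- k ^ 2 * t) + h t * (- k ^ 2 * exp (- k ^ 2 * t)))).
  - intros; reflexivity.
  - ring.
  - apply (dR_mult h (fun s => exp (- k ^ 2 * s))); auto. apply expd.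
Qed.

Definition fr (k t : R) := phi k t * exp (- k ^ 2 * t).
Definition fr1 (k t : R) := (phi1 k t - k ^ 2 * phi k t) * exp (- k ^ 2 * t).
Definition fr2 (k t : R) := (phi2 k t - 2 * k ^ 2 * phi1 k t + k ^ 4 * phi k t) * exp (- k ^ 2 * t).
Definition fr3 (k t : R) := ((phi3 k t - 2 * k ^ 2 * phi2 k t + k ^ 4 * phi1 k t)
   - k ^ 2 * (phi2 k t - 2 * k ^ 2 * phi1 k t + k ^ 4 * phi k t)) * exp (- k ^ 2 * t).
Definition gr (k k' t : R) := psi k t * exp (- k' ^ 2 * t).
Definition gr1 (k k' t : R) := (psi1 k t - k' ^ 2 * psi k t) * exp (- k' ^ 2 * t).
Definition gr2 (k k' t : R) := (psi2 k t - 2 * k' ^ 2 * psi1 k t + k' ^ 4 * psi k t) * exp (- k' ^ 2 * t).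
Definition gr3 (k k' t : R) := ((psi3 k t - 2 * k' ^ 2 * psi2 k t + k' ^ 4 * psi1 k t)
   - k' ^ 2 * (psi2 k t - 2 * k' ^ 2 * psi1 k t + k' ^ 4 * psi k t)) * exp (- k' ^ 2 * t).

Lemma fr_d0 k t : is_derive (fr k) t (fr1 k t).
Proof. apply (pe_d (phi k) (phi1 k) k t). apply phi_d0. Qed.
Lemma fr_d1 k t : is_derive (fr1 k) t (fr2 k t).
Proof.
  eapply (dR_ext _ (fr1 k) t). intros s; reflexivity. 2:
  apply (pe_d (fun s => phi1 k s - k ^ 2 * phi k s) (fun s => phi2 k s - k ^ 2 * phi1 k s) k t).
  unfold fr2; ring.
  intros x. apply dR_minus. apply phi_d1. apply dR_scal. apply phi_d0.
Qed.
Lemma fr_d2 k t : is_derive (fr2 k) t (fr3 k t).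
Proof.
  eapply (dR_ext _ (fr2 k) t). intros s; reflexivity. 2:
  apply (pe_d (fun s => phi2 k s - 2 * k ^ 2 * phi1 k s + k ^ 4 * phi k s)
          (fun s => phi3 k s - 2 * k ^ 2 * phi2 k s + k ^ 4 * phi1 k s) k t).
  unfold fr3; ring.
  intros x. apply dR_plus. apply dR_minus. apply phi_d2. apply dR_scal. apply phi_d1.
  apply dR_scal. apply phi_d0.
Qed.
Lemma gr_d0 k k' t : is_derive (gr k k') t (gr1 k k' t).
Proof. apply (pe_d (psi k) (psi1 k) k' t). apply psi_d0. Qed.
Lemma gr_d1 k k' t : is_derive (gr1 k k') t (gr2 k k' t).
Proof.
  eapply (dR_ext _ (gr1 k k') t). intros s; reflexivity. 2:
  apply (pe_d (fun s => psi1 k s - k' ^ 2 * psi k s) (fun s => psi2 k s - k' ^ 2 * psi1 k s) k' t).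
  unfold gr2; ring.
  intros x. apply dR_minus. apply psi_d1. apply dR_scal. apply psi_d0.
Qed.
Lemma gr_d2 k k' t : is_derive (gr2 k k') t (gr3 k k' t).
Proof.
  eapply (dR_ext _ (gr2 k k') t). intros s; reflexivity. 2:
  apply (pe_d (fun s => psi2 k s - 2 * k' ^ 2 * psi1 k s + k' ^ 4 * psi k s)
          (fun s => psi3 k s - 2 * k' ^ 2 * psi2 k s + k' ^ 4 * psi1 k s) k' t).
  unfold gr3; ring.
  intros x. apply dR_plus. apply dR_minus. apply psi_d2. apply dR_scal. apply psi_d1.
  apply dR_scal. apply psi_d0.
Qed.

Lemma P0_mid x : 1 <= x -> P0 x = 1. Proof. apply P0_ge1. Qed.

Lemma F1 k t : 0 < k -> phi1 k t * (1 - psi k t) = 0.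
Proof.
  intros Hk. unfold phi1, psi.
  destruct (Rle_dec (k * t - 2) 0). rewrite P1_le0 by auto; ring.
  destruct (Rle_dec 1 (k * t - 2)). rewrite P1_ge1 by auto; ring.
  rewrite P0_ge1 by lra. ring.
Qed.
Lemma F2 k t : 0 < k -> psi1 k t * (1 - phi k t) = 0.
Proof.
  intros Hk. unfold psi1, phi.
  destruct (Rle_dec (2 * k * t - 1) 0). rewrite P1_le0 by auto; ring.
  destruct (Rle_dec 1 (2 * k * t - 1)). rewrite P1_ge1 by auto; ring.
  rewrite P0_le0 by lra. ring.
Qed.
Lemma F3 k t : 0 < k -> t <= 1 / (2 * k) ->
  phi k t = 1 /\ phi1 k t = 0 /\ psi k t = 0 /\ psi1 k t = 0.
Proof.
  intros Hk Ht. assert (H : 2 * k * t <= 1).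
  { apply Rmult_le_compat_l with (r := 2 * k) in Ht; [|lra].
    replace (2 * k * (1 / (2 * k))) with 1 in Ht by (field; lra). lra. }
  unfold phi, phi1, psi, psi1. rewrite P0_le0, P1_le0, P0_le0, P1_le0 by lra.
  repeat split; ring.
Qed.
Lemma F4 k t : 0 < k -> 3 / k <= t ->
  phi k t = 0 /\ phi1 k t = 0 /\ psi k t = 1 /\ psi1 k t = 0.
Proof.
  intros Hk Ht. assert (H : 3 <= k * t).
  { apply Rmult_le_compat_l with (r := k) in Ht; [|lra].
    replace (k * (3 / k)) with 3 in Ht by (field; lra). lra. }
  unfold phi, phi1, psi, psi1. rewrite P0_ge1, P1_ge1, P0_ge1, P1_ge1 by lra.
  repeat split; ring.
Qed.

Lemma absle_iff a x : Rabs x <= a <-> -a <= x <= a.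
Proof. unfold Rabs; destruct (Rcase_abs x); split; intros; lra. Qed.

Lemma phi_bounds k t : 0 < k ->
  Rabs (phi k t) <= 210 /\ Rabs (phi1 k t) <= 1120 * k /\ Rabs (phi2 k t) <= 5040 * k ^ 2.
Proof.
  intros Hk. destruct (P_bounds (k * t - 2)) as [A [B C]].
  rewrite absle_iff in A, B, C.
  assert (K2 : 0 < k ^ 2) by (apply pow_lt; lra).
  unfold phi, phi1, phi2. rewrite !absle_iff. repeat split; nra.
Qed.
Lemma psi_bounds k t : 0 < k ->
  Rabs (psi k t) <= 209 /\ Rabs (psi1 k t) <= 2240 * k /\ Rabs (psi2 k t) <= 20160 * k ^ 2.
Proof.
  intros Hk. destruct (P_bounds (2 * k * t - 1)) as [A [B C]].
  rewrite absle_iff in A, B, C.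
  assert (K2 : 0 < k ^ 2) by (apply pow_lt; lra).
  unfold psi, psi1, psi2. rewrite !absle_iff. repeat split; nra.
Qed.

Lemma exp_mono x y : x <= y -> exp x <= exp y.
Proof. intros [H|H]. left; apply exp_increasing; auto. subst; lra. Qed.

Lemma cexpi_mult a b : (cexpi a * cexpi b)%C = cexpi (a + b).
Proof. unfold cexpi, Cmult. rewrite cos_plus, sin_plus. cbn [fst snd]. f_equal; ring. Qed.

Lemma cexpi_arg a b : a = b -> cexpi a = cexpi b.
Proof. intros; subst; auto. Qed.

Lemma cexpi_addp th n : cexpi (th + 2 * INR n * PI) = cexpi th.
Proof. unfold cexpi. rewrite cos_period, sin_period. auto. Qed.
Lemma cexpi_subp th n : cexpi (th - 2 * INR n * PI) = cexpi th.
Proof. rewrite <- (cexpi_addp (th - 2 * INR n * PI) n). apply cexpi_arg; ring. Qed.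

Lemma Cmod_cexpi th : Cmod (cexpi th) = 1.
Proof. unfold Cmod, cexpi; cbn [fst snd]. rewrite <- sqrt_1. f_equal.
  rewrite <- (sin2_cos2 th). unfold Rsqr. ring. Qed.

Definition beta (k k' t : R) := psi1 k t * exp ((k ^ 2 - k' ^ 2) * t) / k.
Definition delta (k k' t : R) := phi1 k t * exp ((k' ^ 2 - k ^ 2) * t) / k'.
Definition zm : C := (0, -1).
Definition Bf (k k' : R) (x y t : R) : C * C :=
  ((RtoC (beta k k' t) * (zm * cexpi (k' * y - k * x)))%C,
   (RtoC (delta k k' t) * (zm * cexpi (k * x - k' * y)))%C).

Definition aD k (d : dir) := match d with DT => fr1 k | _ => fr k end.
Definition aD' k (d : dir) := match d with DT => fr2 k | _ => fr1 k end.
Definition bD k k' (d : dir) := match d with DT => gr1 k k' | _ => gr k k' end.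
Definition bD' k k' (d : dir) := match d with DT => gr2 k k' | _ => gr1 k k' end.
Definition zaD k (d : dir) : C := match d with DX => (RtoC 1 * (0, k))%C | DY => RtoC 0 | DT => RtoC 1 end.
Definition zbD k' (d : dir) : C := match d with DX => RtoC 0 | DY => (RtoC 1 * (0, k'))%C | DT => RtoC 1 end.
Definition D1f k k' (d : dir) := W k k' (aD k d) (zaD k d) (bD k k' d) (zbD k' d).
Definition D2f k k' (d e : dir) :=
  match e with
  | DX => W k k' (aD k d) (zaD k d * (0, k))%C (bD k k' d) (RtoC 0)
  | DY => W k k' (aD k d) (RtoC 0) (bD k k' d) (zbD k' d * (0, k'))%C
  | DT => W k k' (aD' k d) (zaD k d) (bD' k k' d) (zbD k' d)
  end.

Lemma aD_d k d t : is_derive (aD k d) t (aD' k d t).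
Proof. destruct d; simpl; auto using fr_d0, fr_d1. Qed.
Lemma bD_d k k' d t : is_derive (bD k k' d) t (bD' k k' d t).
Proof. destruct d; simpl; auto using gr_d0, gr_d1. Qed.
Lemma aD_c k d t : continuous (aD k d) t.
Proof. apply (cR_of_der _ (aD' k d)). intros; apply aD_d. Qed.
Lemma bD_c k k' d t : continuous (bD k k' d) t.
Proof. apply (cR_of_der _ (bD' k k' d)). intros; apply bD_d. Qed.
Lemma aD'_c k d t : continuous (aD' k d) t.
Proof. destruct d; simpl.
  1,2: apply (cR_of_der _ (fr2 k)); intros; apply fr_d1.
  apply (cR_of_der _ (fr3 k)); intros; apply fr_d2. Qed.
Lemma bD'_c k k' d t : continuous (bD' k k' d) t.
Proof. destruct d; simpl.
  1,2: apply (cR_of_der _ (gr2 k k')); intros; apply gr_d1.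
  apply (cR_of_der _ (gr3 k k')); intros; apply gr_d2. Qed.

Lemma slab_ok (S : R -> Prop) k k' :
  C2_slab S (W k k' (fr k) (RtoC 1) (gr k k') (RtoC 1)) (D1f k k') (D2f k k').
Proof.
  split; [|split].
  - apply W_cont; intros. apply (aD_c k DX). apply (bD_c k k' DX).
  - intros d. split.
    + destruct d.
      * apply W_partial_X.
      * apply W_partial_Y.
      * apply W_partial_T. apply fr_d0. apply gr_d0.
    + apply W_cont; intros; [apply aD_c | apply bD_c].
  - intros d e. split.
    + destruct e.
      * apply W_partial_X.
      * apply W_partial_Y.
      * apply W_partial_T; intros; [apply aD_d | apply bD_d].
    + destruct e; apply W_cont; intros.
      * apply aD_c. * apply bD_c. * apply aD_c. * apply bD_c. * apply aD'_c. * apply bD'_c.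
Qed.

Lemma eqn_ok k k' x y t : 0 < k -> 0 < k' ->
  D1f k k' DT x y t =
  (D2f k k' DX DX x y t + D2f k k' DY DY x y t
   + fst (Bf k k' x y t) * D1f k k' DX x y t + snd (Bf k k' x y t) * D1f k k' DY x y t)%C.
Proof.
  intros Hk Hk'. unfold D1f, D2f, Bf, W. cbn [fst snd aD bD aD' bD' zaD zbD].
  set (E1 := cexpi (k * x)). set (E2 := cexpi (k' * y)).
  assert (Hq1 : (cexpi (k' * y - k * x) * E1)%C = E2).
  { unfold E1, E2. rewrite cexpi_mult. apply cexpi_arg; ring. }
  assert (Hq2 : (cexpi (k * x - k' * y) * E2)%C = E1).
  { unfold E1, E2. rewrite cexpi_mult. apply cexpi_arg; ring. }
  set (Q1 := cexpi (k' * y - k * x)) in *. set (Q2 := cexpi (k * x - k' * y)) in *.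
  match goal with |- _ = ?R =>
    replace R with (RtoC (fr k t) * ((RtoC 1 * (0, k)) * (0, k)) * E1
      + RtoC (gr k k' t) * ((RtoC 1 * (0, k')) * (0, k')) * E2
      + (RtoC (beta k k' t) * zm * RtoC (fr k t) * (RtoC 1 * (0, k))) * (Q1 * E1)
      + (RtoC (delta k k' t) * zm * RtoC (gr k k' t) * (RtoC 1 * (0, k'))) * (Q2 * E2))%C by ring
  end.
  rewrite Hq1, Hq2.
  assert (Eexp : exp (- k ^ 2 * t) = exp ((k' ^ 2 - k ^ 2) * t) * exp (- k' ^ 2 * t)).
  { rewrite <- exp_plus. f_equal; ring. }
  assert (Eexp' : exp (- k' ^ 2 * t) = exp ((k ^ 2 - k' ^ 2) * t) * exp (- k ^ 2 * t)).
  { rewrite <- exp_plus. f_equal; ring. }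
  assert (HA : RtoC (fr1 k t) = (RtoC (fr k t) * ((RtoC 1 * (0, k)) * (0, k))
      + RtoC (delta k k' t) * zm * RtoC (gr k k' t) * (RtoC 1 * (0, k')))%C).
  { unfold fr1, fr, delta, gr, zm, Cmult, Cplus, RtoC. cbn [fst snd].
    destruct (Rmult_integral _ _ (F1 k t Hk)) as [Z|Z].
    - rewrite Z. f_equal; field; lra.
    - assert (Z' : psi k t = 1) by lra. rewrite Z'. rewrite Eexp. f_equal; field; lra. }
  assert (HB : RtoC (gr1 k k' t) = (RtoC (gr k k' t) * ((RtoC 1 * (0, k')) * (0, k'))
      + RtoC (beta k k' t) * zm * RtoC (fr k t) * (RtoC 1 * (0, k)))%C).
  { unfold gr1, gr, beta, fr, zm, Cmult, Cplus, RtoC. cbn [fst snd].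
    destruct (Rmult_integral _ _ (F2 k t Hk)) as [Z|Z].
    - rewrite Z. f_equal; field; lra.
    - assert (Z' : phi k t = 1) by lra. rewrite Z'. rewrite Eexp'. f_equal; field; lra. }
  rewrite HA, HB. ring.
Qed.

Lemma early_ok k k' x y t : 0 < k -> t <= 1 / (2 * k) ->
  W k k' (fr k) (RtoC 1) (gr k k') (RtoC 1) x y t = (cexpi (k * x) * RtoC (exp (- k ^ 2 * t)))%C /\
  Bf k k' x y t = (RtoC 0, RtoC 0).
Proof.
  intros Hk Ht. destruct (F3 k t Hk Ht) as [A [B [C D]]]. split.
  - unfold W, fr, gr. rewrite A, C. unfold cexpi, Cmult, Cplus, RtoC. cbn [fst snd]. f_equal; ring.
  - unfold Bf, beta, delta. rewrite B, D. unfold Cmult, RtoC. cbn [fst snd]. f_equal; f_equal; unfold Rdiv; ring.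
Qed.

Lemma late_ok k k' x y t : 0 < k -> 3 / k <= t ->
  W k k' (fr k) (RtoC 1) (gr k k') (RtoC 1) x y t = (cexpi (k' * y) * RtoC (exp (- k' ^ 2 * t)))%C /\
  Bf k k' x y t = (RtoC 0, RtoC 0).
Proof.
  intros Hk Ht. destruct (F4 k t Hk Ht) as [A [B [C D]]]. split.
  - unfold W, fr, gr. rewrite A, C. unfold cexpi, Cmult, Cplus, RtoC. cbn [fst snd]. f_equal; ring.
  - unfold Bf, beta, delta. rewrite B, D. unfold Cmult, RtoC. cbn [fst snd].
    f_equal; f_equal; unfold Rdiv; ring.
Qed.

Lemma per_u (n m : nat) : periodic2 (W (INR n) (INR m) (fr (INR n)) (RtoC 1) (gr (INR n) (INR m)) (RtoC 1)).
Proof.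
  intros x y t. unfold W. split.
  - replace (INR n * (x + 2 * PI)) with (INR n * x + 2 * INR n * PI) by ring.
    rewrite cexpi_addp. auto.
  - replace (INR m * (y + 2 * PI)) with (INR m * y + 2 * INR m * PI) by ring.
    rewrite cexpi_addp. auto.
Qed.

Lemma per_B (n m : nat) : periodic2 (Bf (INR n) (INR m)).
Proof.
  intros x y t. unfold Bf. split.
  - replace (INR m * y - INR n * (x + 2 * PI)) with ((INR m * y - INR n * x) - 2 * INR n * PI) by ring.
    replace (INR n * (x + 2 * PI) - INR m * y) with ((INR n * x - INR m * y) + 2 * INR n * PI) by ring.
    rewrite cexpi_addp, cexpi_subp. auto.
  - replace (INR m * (y + 2 * PI) - INR n * x) with ((INR m * y - INR n * x) + 2 * INR m * PI) by ring.
    replace (INR n * x - INR m * (y + 2 * PI)) with ((INR n * x - INR m * y) - 2 * INR m * PI) by ring.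
    rewrite cexpi_addp, cexpi_subp. auto.
Qed.

Lemma Cmod_zm : Cmod zm = 1.
Proof. unfold Cmod, zm; cbn [fst snd]. rewrite <- sqrt_1. f_equal; ring. Qed.

Lemma B_bound k k' x y t : 1 <= k -> k <= k' -> k' <= k + 10 -> 0 <= t <= 7 / (2 * k) ->
  C2norm (Bf k k' x y t) <= 3000 + 2000 * exp 420.
Proof.
  intros H1 H2 H3 [T0 T1].
  assert (Hk : 0 < k) by lra.
  assert (Tk : 2 * k * t <= 7).
  { apply Rmult_le_compat_l with (r := 2 * k) in T1; [|lra].
    replace (2 * k * (7 / (2 * k))) with 7 in T1 by (field; lra). lra. }
  unfold C2norm, Bf. cbn [fst snd]. rewrite !Cmod_mult, !Cmod_R, Cmod_zm, !Cmod_cexpi, !Rmult_1_l, !Rmult_1_r.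
  assert (Bb : Rabs (beta k k' t) <= 2240).
  { unfold beta. destruct (psi_bounds k t Hk) as [_ [A _]].
    assert (E : exp ((k ^ 2 - k' ^ 2) * t) <= 1).
    { rewrite <- exp_0. apply exp_mono. assert (k ^ 2 <= k' ^ 2) by nra. nra. }
    assert (E0 := exp_pos ((k ^ 2 - k' ^ 2) * t)).
    unfold Rdiv. rewrite !Rabs_mult, Rabs_inv, (Rabs_pos_eq (exp _)), (Rabs_pos_eq k) by lra.
    apply Rle_trans with (2240 * k * 1 * / k).
    - apply Rmult_le_compat_r. left; apply Rinv_0_lt_compat; lra.
      apply Rmult_le_compat; auto using Rabs_pos; lra.
    - right; field; lra. }
  assert (Db : Rabs (delta k k' t) <= 1120 * exp 420).
  { unfold delta. destruct (phi_bounds k t Hk) as [_ [A _]].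
    assert (E : exp ((k' ^ 2 - k ^ 2) * t) <= exp 420).
    { apply exp_mono. assert (Th : t <= 7 / 2) by nra.
      assert (Sk : (k' + k) * t <= 42) by nra.
      assert (Sk0 : 0 <= (k' + k) * t) by nra.
      replace ((k' ^ 2 - k ^ 2) * t) with ((k' - k) * ((k' + k) * t)) by ring. nra. }
    assert (E0 := exp_pos ((k' ^ 2 - k ^ 2) * t)).
    unfold Rdiv. rewrite !Rabs_mult, Rabs_inv, (Rabs_pos_eq (exp _)), (Rabs_pos_eq k') by lra.
    apply Rle_trans with (1120 * k * exp 420 * / k').
    - apply Rmult_le_compat_r. left; apply Rinv_0_lt_compat; lra.
      apply Rmult_le_compat; auto using Rabs_pos; lra.
    - apply Rle_trans with (1120 * k' * exp 420 * / k').
      + apply Rmult_le_compat_r. left; apply Rinv_0_lt_compat; lra.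
        assert (0 < exp 420) by apply exp_pos. nra.
      + right; field; lra. }
  set (a := Rabs (beta k k' t)) in *. set (b := Rabs (delta k k' t)) in *.
  assert (0 <= a) by apply Rabs_pos. assert (0 <= b) by apply Rabs_pos.
  assert (0 < exp 420) by apply exp_pos.
  apply Rle_trans with (sqrt ((a + b) ^ 2)).
  - apply sqrt_le_1_alt. nra.
  - rewrite sqrt_pow2 by lra. lra.
Qed.

Lemma fg_bounds k k' t : 1 <= k -> k <= k' -> 0 <= t ->
  Cmod (RtoC (fr k t)) <= 30000 * exp (- k ^ 2 * t) /\
  Cmod (RtoC (fr1 k t)) <= 30000 * k ^ 2 * exp (- k ^ 2 * t) /\
  Cmod (RtoC (fr2 k t)) <= 30000 * k ^ 4 * exp (- k ^ 2 * t) /\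
  Cmod (RtoC (gr k k' t)) <= 30000 * exp (- k' ^ 2 * t) /\
  Cmod (RtoC (gr1 k k' t)) <= 30000 * k' ^ 2 * exp (- k' ^ 2 * t) /\
  Cmod (RtoC (gr2 k k' t)) <= 30000 * k' ^ 4 * exp (- k' ^ 2 * t).
Proof.
  intros H1 H2 T0. assert (Hk : 0 < k) by lra.
  destruct (phi_bounds k t Hk) as [A1 [A2 A3]].
  destruct (psi_bounds k t Hk) as [B1 [B2 B3]].
  rewrite absle_iff in A1, A2, A3, B1, B2, B3.
  assert (e1 := exp_pos (- k ^ 2 * t)). assert (e2 := exp_pos (- k' ^ 2 * t)).
  assert (K2 : k <= k ^ 2) by nra. assert (K3 : k ^ 2 <= k ^ 3) by nra.
  assert (K4 : k ^ 3 <= k ^ 4) by nra.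
  assert (L2 : k ^ 2 <= k' ^ 2) by nra. assert (L3 : k' ^ 2 <= k' ^ 3) by nra.
  assert (L4 : k' ^ 3 <= k' ^ 4) by nra. assert (L1 : k' <= k' ^ 2) by nra.
  assert (KL : k * k' ^ 2 <= k' ^ 4) by nra.
  unfold fr, fr1, fr2, gr, gr1, gr2. rewrite !Cmod_R, !Rabs_mult, !(Rabs_pos_eq (exp _)) by lra.
  repeat split; apply Rmult_le_compat_r; try lra; rewrite absle_iff; split; nra.
Qed.

Lemma hdw_R D (h : R -> R) s l : is_derive h s l -> has_deriv_within D (fun r => RtoC (h r)) s (RtoC l).
Proof.
  intros H. apply hdw_of. exact H.
  apply (dR_ext (fun _ => 0) _ s 0 0); auto. apply dR_const.
Qed.
Lemma cw1_R D (h : R -> R) s : continuous h s -> cont_within1 D (fun r => RtoC (h r)) s.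
Proof. intros H. apply cw1_of. exact H. apply continuous_const. Qed.

Lemma cR_ext {U : UniformSpace} (f g : U -> R) x : (forall y, f y = g y) -> continuous f x -> continuous g x.
Proof. intros; apply (continuous_ext f g); auto. Qed.

Lemma cBpart (h : R -> R) (th : R*R*R -> R) p : continuous (fun q => h (snd q)) p -> continuous th p ->
  continuous (fun q => (RtoC (h (snd q)) * (zm * cexpi (th q)))%C) p.
Proof.
  intros Hh Ht. apply cont_pair.
  - apply (cR_ext (fun q => h (snd q) * sin (th q))).
    intros q; unfold zm, cexpi, Cmult, RtoC; cbn [fst snd]; ring.
    apply cR_mult; auto. apply cR_comp; auto using cR_sin.
  - apply (cR_ext (fun q => - (h (snd q) * cos (th q)))).
    intros q; unfold zm, cexpi, Cmult, RtoC; cbn [fst snd]; ring.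
    apply (continuous_opp (fun q => h (snd q) * cos (th q))).
    apply cR_mult; auto. apply cR_comp; auto using cR_cos.
Qed.

Lemma B_cont k k' (S : R -> Prop) : cont_on_slab S (Bf k k').
Proof.
  intros x y t _. unfold cont_on_slab.
  apply (cont_within (fun p : R*R*R => Bf k k' (fst (fst p)) (snd (fst p)) (snd p))).
  assert (Cb : forall r, continuous (beta k k') r).
  { intros r. unfold beta, Rdiv. apply cR_mult; [|apply continuous_const].
    apply cR_mult. apply (cR_of_der _ (psi2 k)); intros; apply psi_d1.
    apply cR_comp. apply cR_exp. apply cR_mult. apply continuous_const. apply continuous_id. }
  assert (Cd : forall r, continuous (delta k k') r).
  { intros r. unfold delta, Rdiv. apply cR_mult; [|apply continuous_const].
    apply cR_mult. apply (cR_of_der _ (phi2 k)); intros; apply phi_d1.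
    apply cR_comp. apply cR_exp. apply cR_mult. apply continuous_const. apply continuous_id. }
  apply cont_pair; unfold Bf; cbn [fst snd].
  - apply (cBpart (beta k k') (fun q => k' * snd (fst q) - k * fst (fst q))).
    apply cR_comp; auto. apply c3_t.
    apply cR_minus; apply cR_mult; try apply continuous_const. apply c3_y. apply c3_x.
  - apply (cBpart (delta k k') (fun q => k * fst (fst q) - k' * snd (fst q))).
    apply cR_comp; auto. apply c3_t.
    apply cR_minus; apply cR_mult; try apply continuous_const. apply c3_x. apply c3_y.
Qed.

Theorem mainTheorem16 :
  exists B0 M : R,
  forall k k' : nat, (1 <= k)%nat -> (k <= k')%nat -> (k' <= k + 10)%nat ->
  let kr := INR k in
  let kr' := INR k' in
  let T := 7 / (2 * kr) in
  let S := fun t => 0 <= t <= T in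
  exists (u : R -> R -> R -> C) (B : R -> R -> R -> C * C)
         (D1 : dir -> R -> R -> R -> C) (D2 : dir -> dir -> R -> R -> R -> C)
         (f f1 f2 g g1 g2 : R -> C),
    periodic2 u /\ periodic2 B /\
    C2_slab S u D1 D2 /\
    cont_on_slab S B /\
    (forall x y t, S t -> C2norm (B x y t) <= B0) /\
    (* u_t = Delta u + B . grad u on T^2 x [0, 7/(2k)] *)
    (forall x y t, S t ->
       D1 DT x y t =
       (D2 DX DX x y t + D2 DY DY x y t
        + fst (B x y t) * D1 DX x y t + snd (B x y t) * D1 DY x y t)%C) /\
    (forall x y t, 0 <= t <= 1 / (2 * kr) ->
       u x y t = (cexpi (kr * x) * RtoC (exp (- kr ^ 2 * t)))%C /\ B x y t = (RtoC 0, RtoC 0)) /\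
    (forall x y t, 3 / kr <= t <= T ->
       u x y t = (cexpi (kr' * y) * RtoC (exp (- kr' ^ 2 * t)))%C /\ B x y t = (RtoC 0, RtoC 0)) /\
    (forall x y t, S t ->
       u x y t = (f t * cexpi (kr * x) + g t * cexpi (kr' * y))%C) /\
    C2_on S f f1 f2 /\ C2_on S g g1 g2 /\
    (forall t, S t ->
       Cmod (f t) <= M * exp (- kr ^ 2 * t) /\
       Cmod (f1 t) <= M * kr ^ 2 * exp (- kr ^ 2 * t) /\
       Cmod (f2 t) <= M * kr ^ 4 * exp (- kr ^ 2 * t) /\
       Cmod (g t) <= M * exp (- kr' ^ 2 * t) /\
       Cmod (g1 t) <= M * kr' ^ 2 * exp (- kr' ^ 2 * t) /\
       Cmod (g2 t) <= M * kr' ^ 4 * exp (- kr' ^ 2 * t)).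
Proof.
  exists (3000 + 2000 * exp 420), 30000.
  intros k k' Hk1 Hkk' Hk10. cbv zeta.
  assert (R1 : 1 <= INR k) by (apply (le_INR 1); auto).
  assert (R2 : INR k <= INR k') by (apply le_INR; auto).
  assert (R3 : INR k' <= INR k + 10).
  { replace 10 with (INR 10) by (simpl; ring). rewrite <- plus_INR. apply le_INR; auto. }
  assert (Hk : 0 < INR k) by lra. assert (Hk' : 0 < INR k') by lra.
  set (kr := INR k) in *. set (kr' := INR k') in *.
  exists (W kr kr' (fr kr) (RtoC 1) (gr kr kr') (RtoC 1)), (Bf kr kr'), (D1f kr kr'), (D2f kr kr'),
    (fun t => RtoC (fr kr t)), (fun t => RtoC (fr1 kr t)), (fun t => RtoC (fr2 kr t)),
    (fun t => RtoC (gr kr kr' t)), (fun t => RtoC (gr1 kr kr' t)), (fun t => RtoC (gr2 kr kr' t)).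
  split; [apply per_u|].
  split; [apply per_B|].
  split; [apply slab_ok|].
  split.
  { apply B_cont. }
  split; [intros x y t Ht; apply B_bound; auto; lra|].
  split; [intros x y t _; apply eqn_ok; auto|].
  split; [intros x y t [T0 T1]; apply early_ok; auto|].
  split; [intros x y t [T0 T1]; apply late_ok; auto|].
  split; [intros x y t _; unfold W; ring|].
  split.
  { intros s _. repeat split.
    - apply hdw_R. apply fr_d0.
    - apply hdw_R. apply fr_d1.
    - apply cw1_R. apply (aD_c kr DX).
    - apply cw1_R. apply (aD_c kr DT).
    - apply cw1_R. apply (aD'_c kr DT). }
  split.
  { intros s _. repeat split.
    - apply hdw_R. apply gr_d0.
    - apply hdw_R. apply gr_d1.
    - apply cw1_R. apply (bD_c kr kr' DX).
    - apply cw1_R. apply (bD_c kr kr' DT).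
    - apply cw1_R. apply (bD'_c kr kr' DT). }
  intros t [T0 T1]. apply fg_bounds; auto.
Qed.
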